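(* Let $\mathbb{F}$ be a field, $d\geq 3$ and $V$ a vector space over $\mathbb{F}$ of dimension $d+1$. Let $E^*_0,\dots,E^*_d$ be a system of mutually orthogonal idempotents in $\mathrm{End}(V)$ and $A\in\mathrm{End}(V)$ with $E^*_iAE^*_j=0$ if $|i-j|>1$ and $E^*_iAE^*_j\neq0$ if $|i-j|=1$. Assume $A$ is multiplicity-free and bipartite with primitive idempotents $E_0,\dots,E_d$ and eigenvalues $\theta_0,\dots,\theta_d$. Let $\theta^*_0,\dots,\theta^*_d\in\mathbb{F}$ be mutually distinct and $A^*=\sum_i\theta^*_iE^*_i$. Assume $E_0$ is normalizing and that in $\Delta$ the vertex $E_0$ is adjacent to $E_1$ and to no other vertex. Then $\theta_0(\theta^*_{d-1}-\theta^*_1)=\theta_1(\theta^*_d-\theta^*_0)$, and both $\theta_0$ and $\theta_1$ are nonzero.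
   Context: A system of mutually orthogonal idempotents is a sequence $E^*_0,\dots,E^*_d$ of linear maps $V\to V$ with $E^*_iE^*_j=\delta_{ij}E^*_i$ and $\operatorname{rank}E^*_i=1$. $A$ is multiplicity-free if it has $d+1$ mutually distinct eigenvalues in $\mathbb{F}$; the primitive idempotent $E_i$ for $\theta_i$ is the projection onto the $\theta_i$-eigenspace along the sum of the other eigenspaces. $A$ is bipartite if $\operatorname{tr}(E^*_iA)=0$ for all $i$. $\Delta$ is the graph with vertices $E_0,\dots,E_d$, where $E_i\neq E_j$ are adjacent iff $E_iA^*E_j\neq0$. For a basis $v_0,\dots,v_d$, the matrix $Y$ representing $A$ satisfies $Av_j=\sum_iY_{ij}v_i$. An eigenvalue $\theta$ of $A$ is normalizing if there is a basis $v_0,\dots,v_d$ with $v_i\in E^*_iV$ such that every row of the matrix representing $A$ sums to $\theta$; $E_i$ is normalizing if $\theta_i$ is. *)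

(* Defs.v *)
(* V = 'cV[F]_(d.+1) (column vectors); an endomorphism
   of V is a square matrix M acting by v |-> M *m v, so composition of
   maps is matrix multiplication. *)
From HB Require Import structures.
From mathcomp Require Import all_boot all_order all_algebra.
Set Implicit Arguments. Unset Strict Implicit. Unset Printing Implicit Defensive.
Import GRing.Theory.
Local Open Scope ring_scope.

Section Defs.
Variables (F : fieldType) (n : nat).

Definition mo_idempotents (Es : 'I_n -> 'M[F]_n) : Prop :=
  (forall i j, Es i *m Es j = if i == j then Es i else 0) /\
  (forall i, \rank (Es i) = 1%N).

Definition is_eigenvalue (A : 'M[F]_n) (th : F) : Prop :=
  exists2 v : 'cV[F]_n, v != 0 & A *m v = th *: v.

Definition mult_free_with (A : 'M[F]_n) (th : 'I_n -> F) : Prop :=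
  injective th /\ forall i, is_eigenvalue A (th i).

(* E is the projection onto the th_i-eigenspace along the sum of the
   other eigenspaces *)
Definition primitive_idempotent (A : 'M[F]_n) (th : 'I_n -> F) (i : 'I_n)
    (E : 'M[F]_n) : Prop :=
  (forall v : 'cV[F]_n, A *m (E *m v) = th i *: (E *m v)) /\
  (forall v : 'cV[F]_n, A *m v = th i *: v -> E *m v = v) /\
  (forall (j : 'I_n) (v : 'cV[F]_n), j != i -> A *m v = th j *: v -> E *m v = 0).

Definition bipartite (Es : 'I_n -> 'M[F]_n) (A : 'M[F]_n) : Prop :=
  forall i, \tr (Es i *m A) = 0.

Definition Delta_adj (E : 'I_n -> 'M[F]_n) (As : 'M[F]_n) (i j : 'I_n) : Prop :=
  i != j /\ E i *m As *m E j != 0.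

(* th is normalizing: a basis v_0..v_{n-1} (the columns of an invertible P)
   with v_i in E*_i V, such that the matrix Y representing A
   (A v_j = sum_i Y_ij v_i, i.e. A P = P Y) has all row sums equal to th *)
Definition normalizing (Es : 'I_n -> 'M[F]_n) (A : 'M[F]_n) (th : F) : Prop :=
  exists P : 'M[F]_n,
    [/\ P \in unitmx,
        (forall i, Es i *m col i P = col i P) &
        exists Y : 'M[F]_n,
          A *m P = P *m Y /\ forall i, \sum_j Y i j = th].

End Defs.

(* Main.v *)
Require Import Defs.
From HB Require Import structures.
From mathcomp Require Import all_boot all_order all_algebra.
From mathcomp Require Import zify ring.
Import GRing.Theory.
Local Open Scope ring_scope.

Section Aux.
Set Implicit Arguments. Unset Strict Implicit. Unset Printing Implicit Defensive.

Lemma eig_facts (F : fieldType) n (Y : 'M[F]_n) (th : 'I_n -> F) :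
 injective th -> (forall k, exists2 v : 'cV_n, v != 0 & Y *m v = th k *: v) ->
 (forall x : 'cV_n, exists y : 'I_n -> 'cV_n, x = \sum_k y k /\ forall k, Y *m y k = th k *: y k) /\
 (forall k (v w : 'cV_n), v != 0 -> Y *m v = th k *: v -> Y *m w = th k *: w -> exists a, w = a *: v).
Proof.
move=> inj hev.
pose eig k := eigenspace Y^T (th k).
have dx : mxdirect (\sum_k eig k)%MS.
  by apply: mxdirect_sum_eigenspace => i j _ _; apply: inj.
have inE k (v : 'cV_n) : Y *m v = th k *: v -> (v^T <= eig k)%MS.
  by move=> hv; apply/eigenspaceP; rewrite -trmx_mul hv linearZ.
have outE k (v : 'rV_n) : (v <= eig k)%MS -> Y *m v^T = th k *: v^T.
  by move/eigenspaceP => hv; rewrite -[Y]trmxK -trmx_mul hv linearZ.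
have rk1 k : (0 < \rank (eig k))%N.
  case: (hev k) => v nz hv; apply: leq_trans (mxrankS (inE k v hv)).
  by rewrite rank_rV trmx_eq0 nz.
have rksum : \rank (\sum_k eig k)%MS = (\sum_k \rank (eig k))%N.
  by move/mxdirectP: dx.
have rkle : (\sum_k \rank (eig k) <= n)%N by rewrite -rksum rank_leq_col.
have hsum : (\sum_k (\rank (eig k)).-1 = 0)%N.
  apply/eqP; rewrite -leqn0 -(leq_add2r n) add0n.
  apply: leq_trans rkle.
  rewrite -[X in (_ + X)%N]card_ord -sum1_card -big_split /=.
  apply: leq_sum => k _.
  by rewrite addn1 prednK.
have rkeq k : \rank (eig k) = 1%N.
  have /eqP := hsum; rewrite sum_nat_eq0 => /forallP /(_ k) /implyP /(_ isT).
  by move: (rk1 k); case: (\rank (eig k)) => // [[]].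
split.
  move=> x.
  have full : row_full (\sum_k eig k)%MS.
    rewrite /row_full rksum (eq_bigr (fun _ => 1%N)) => [|k _]; last exact: rkeq.
    by rewrite sum_nat_const card_ord muln1.
  have /sub_sumsmxP [u hu] := submx_full x^T full.
  exists (fun k => (u k *m eig k)^T); split.
    by rewrite -[x]trmxK hu raddf_sum.
  by move=> k; apply: outE; apply: submxMl.
move=> k v w nz hv hw.
have sv := inE k v hv; have sw := inE k w hw.
have hvr : \rank v^T = 1%N by rewrite rank_rV trmx_eq0 nz.
have ev : (eig k <= v^T)%MS.
  by rewrite -(mxrank_leqif_sup sv).2 hvr rkeq.
have /sub_rVP [a ha] := submx_trans sw ev.
by exists a; rewrite -[w]trmxK ha linearZ /= trmxK.
Qed.

Section H.
Variables (F : fieldType) (n : nat).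

Lemma delta_sandwich (Y : 'M[F]_n) i j :
  delta_mx i i *m Y *m delta_mx j j = Y i j *: delta_mx i j.
Proof.
rewrite -(mul_delta_mx (0 : 'I_1) i i) -(mul_delta_mx (0 : 'I_1) j j).
rewrite !mulmxA -(mulmxA _ _ Y) -rowE -(mulmxA _ _ (delta_mx j 0)) -colE.
rewrite [col j _]mx11_scalar !mxE mul_mx_scalar -scalemxAl mul_delta_mx.
by [].
Qed.

Lemma trace_delta (i : 'I_n) : \tr (delta_mx i i : 'M[F]_n) = 1.
Proof.
rewrite /mxtrace (bigD1 i) //= big1 ?addr0; first by rewrite mxE !eqxx.
by move=> k hk; rewrite mxE (negPf hk).
Qed.

Lemma sum_single (g : 'I_n -> F) k :
  (forall j, j != k -> g j = 0) -> \sum_j g j = g k.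
Proof. by move=> h; rewrite (bigD1 k) //= big1 ?addr0. Qed.

Lemma rV_eq0 (g : 'rV[F]_n) : (forall x : 'cV_n, g *m x = 0) -> g = 0.
Proof.
move=> h; apply/rowP => j; have := h (delta_mx j 0).
by rewrite -colE => /matrixP /(_ 0 0); rewrite !mxE.
Qed.

Lemma conj_eq0 (P Pi M : 'M[F]_n) : Pi *m P = 1%:M -> P *m M *m Pi = 0 -> M = 0.
Proof.
move=> hPi h.
have -> : M = Pi *m (P *m M *m Pi) *m P by rewrite !mulmxA hPi mul1mx -mulmxA hPi mulmx1.
by rewrite h mulmx0 mul0mx.
Qed.

End H.
End Aux.

Fixpoint kseq {F : fieldType} (r : nat -> F) (i : nat) : F :=
  if i is i'.+1 then kseq r i' * r i' else 1.

Theorem corollary7p5 (F : fieldType) (d : nat) (hd : (3 <= d)%N)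
  (Es : 'I_d.+1 -> 'M[F]_d.+1) (A : 'M[F]_d.+1)
  (th : 'I_d.+1 -> F) (E : 'I_d.+1 -> 'M[F]_d.+1) (ths : 'I_d.+1 -> F) :
  mo_idempotents Es ->
  (forall i j : 'I_d.+1, ((i.+1 < j) || (j.+1 < i))%N -> Es i *m A *m Es j = 0) ->
  (forall i j : 'I_d.+1, ((i == j.+1 :> nat) || (j == i.+1 :> nat)) ->
     Es i *m A *m Es j != 0) ->
  mult_free_with A th ->
  (forall i, primitive_idempotent A th i (E i)) ->
  bipartite Es A ->
  injective ths ->
  let As := \sum_i ths i *: Es i in
  normalizing Es A (th ord0) ->
  Delta_adj E As ord0 (inord 1) ->
  (forall j : 'I_d.+1, j != inord 1 -> ~ Delta_adj E As ord0 j) ->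
  th ord0 * (ths (inord d.-1) - ths (inord 1)) = th (inord 1) * (ths ord_max - ths ord0)
  /\ th ord0 != 0 /\ th (inord 1) != 0.
Proof.
move=> [hEs _] htri hnz [thinj thev] hE hbip thsinj As [P [Pu hcol [Y [hAPY hrow]]]] _ hnadj.
set Pi := invmx P.
have hPiP : Pi *m P = 1%:M by rewrite mulVmx.
have hPPi : P *m Pi = 1%:M by rewrite mulmxV.
have hY : Y = Pi *m A *m P by rewrite -mulmxA hAPY mulmxA hPiP mul1mx.
have hEsP i : Es i *m P = P *m delta_mx i i.
  have key b : Es i *m col b P = if b == i then col b P else 0.
    case: eqP => [->|/eqP ne]; first exact: hcol.
    by rewrite -(hcol b) mulmxA hEs eq_sym (negPf ne) mul0mx.
  apply/matrixP => a b.
  have := congr1 (fun M : 'M_(_,_) => M a 0) (key b).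
  rewrite colE mulmxA -colE [in X in X -> _]mxE => ->.
  rewrite mxE (sum_single (k := i)) => [|k hk]; last by rewrite mxE (negPf hk) mulr0.
  rewrite !mxE eqxx /= eq_sym; case: eqP => [->|_]; rewrite ?mulr1 ?mulr0 //.
    by rewrite -colE mxE.
  by rewrite mxE.
have hEsE i : Es i = P *m delta_mx i i *m Pi by rewrite -hEsP -mulmxA hPPi mulmx1.
have hEAE i j : Es i *m A *m Es j = P *m (Y i j *: delta_mx i j) *m Pi.
  by rewrite !hEsE -delta_sandwich hY !mulmxA.
have hYz (i j : 'I_d.+1) : ((i.+1 < j) || (j.+1 < i))%N -> Y i j = 0.
  move=> h; have := conj_eq0 hPiP (etrans (esym (hEAE i j)) (htri i j h)).
  by move/matrixP/(_ i j); rewrite !mxE !eqxx mulr1.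
have hYnz (i j : 'I_d.+1) : ((i == j.+1 :> nat) || (j == i.+1 :> nat)) -> Y i j != 0.
  move=> h; apply: contra (hnz i j h) => /eqP y0.
  by rewrite hEAE y0 scale0r mulmx0 mul0mx.
have hYd i : Y i i = 0.
  have := hbip i; rewrite hEsE -!mulmxA mxtrace_mulC -!mulmxA.
  rewrite [Pi *m _]mulmxA -hY.
  by move=> h; rewrite -[RHS]h -{1}(mul_delta_mx i i i) -mulmxA mxtrace_mulC delta_sandwich mxtraceZ trace_delta mulr1.
have vi1 : ((inord 1 : 'I_d.+1) = 1 :> nat)%N by rewrite inordK // ltnS; apply: leq_trans hd.
have vid : ((inord d.-1 : 'I_d.+1) = d.-1 :> nat)%N by rewrite inordK // ltnS leq_pred.
pose one : 'cV[F]_d.+1 := const_mx 1.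
have hsum : Y *m one = th ord0 *: one.
  apply/colP => a; rewrite !mxE; under eq_bigr do rewrite mxE mulr1.
  by rewrite hrow mulr1.
have hrow0 (x : 'cV_d.+1) : (Y *m x) ord0 0 = Y ord0 (inord 1) * x (inord 1) 0.
  rewrite mxE (sum_single (k := inord 1)) // => j hj.
  have [j0|jn0] := eqVneq j ord0; first by rewrite j0 hYd mul0r.
  rewrite hYz ?mul0r //=; apply/orP; left.
  have : (j : nat) != 1%N by apply: contra hj => /eqP h; apply/eqP/val_inj; rewrite /= vi1.
  have : (j : nat) != 0%N by apply: contra jn0 => /eqP h; apply/eqP/val_inj.
  by case: (j : nat) => [|[|]].
have hrowd (x : 'cV_d.+1) : (Y *m x) ord_max 0 = Y ord_max (inord d.-1) * x (inord d.-1) 0.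
  rewrite mxE (sum_single (k := inord d.-1)) // => j hj.
  have [j0|jn0] := eqVneq j ord_max; first by rewrite j0 hYd mul0r.
  rewrite hYz ?mul0r //=; apply/orP; right.
  have : (j : nat) != d.-1 by apply: contra hj => /eqP h; apply/eqP/val_inj; rewrite /= vid.
  have : (j : nat) != d by apply: contra jn0 => /eqP h; apply/eqP/val_inj.
  have := ltn_ord j; move: (j : nat) => k; lia.
have hY01 : Y ord0 (inord 1) = th ord0.
  by have := congr1 (fun M : 'M_(_,_) => M ord0 0) hsum; rewrite hrow0 !mxE !mulr1.
have hYdd : Y ord_max (inord d.-1) = th ord0.
  by have := congr1 (fun M : 'M_(_,_) => M ord_max 0) hsum; rewrite hrowd !mxE !mulr1.
have th0nz : th ord0 != 0.
  rewrite -hY01; apply: hYnz; rewrite vi1 eqxx orbT //.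
have hYev k : exists2 v : 'cV_d.+1, v != 0 & Y *m v = th k *: v.
  case: (thev k) => v nz hv; exists (Pi *m v).
    by apply: contra nz => /eqP h; rewrite -[v]mul1mx -hPPi -mulmxA h mulmx0.
  by rewrite hY -!mulmxA (mulmxA P) hPPi mul1mx hv scalemxAr.
have [decomp uniq1] := eig_facts thinj hYev.
have hAy (y : 'cV_d.+1) k : Y *m y = th k *: y -> A *m (P *m y) = th k *: (P *m y).
  by move=> hy; rewrite mulmxA hAPY -mulmxA hy scalemxAr.
have hE0 (y : 'cV_d.+1) k : Y *m y = th k *: y ->
    E ord0 *m (P *m y) = if k == ord0 then P *m y else 0.
  move=> /hAy hy; case: (hE ord0) => _ [h2 h3].
  case: eqP hy => [-> hy|/eqP ne hy]; first exact: h2.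
  exact: h3 ne hy.
have hEk (y : 'cV_d.+1) k : Y *m y = th k *: y -> E k *m (P *m y) = P *m y.
  by move=> /hAy hy; case: (hE k) => _ [h2 _]; apply: h2.
pose r (i : nat) := Y (inord i) (inord i.+1) / Y (inord i.+1) (inord i).
have hknz i : (i <= d)%N -> kseq r i != 0.
  elim: i => [|i IH] hi /=; first exact: oner_neq0.
  rewrite mulf_neq0 ?IH 1?ltnW // /r mulf_neq0 // ?invr_eq0; apply: hYnz;
    rewrite !inordK //; try lia; by rewrite eqxx ?orbT.
pose K := diag_mx (\row_(i < d.+1) kseq r i).
have hKY : K *m Y = Y^T *m K.
  rewrite mul_diag_mx mul_mx_diag; apply/matrixP => a b; rewrite !mxE.
  have [hab|hab|hab] := ltngtP a b.
  - have [h|h|h] := ltngtP a.+1 b.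
    + by rewrite !hYz ?h ?orbT ?mulr0 ?mul0r.
    + lia.
    + have eb : (inord a.+1 : 'I_d.+1) = b by apply: val_inj; rewrite /= inordK // h.
      have hba : Y b a != 0 by apply: hYnz; rewrite h eqxx.
      rewrite -h /= /r eb inord_val; field; exact: hba.
  - have [h|h|h] := ltngtP b.+1 a.
    + by rewrite !hYz ?h ?orbT ?mulr0 ?mul0r.
    + lia.
    + have ea : (inord b.+1 : 'I_d.+1) = a by apply: val_inj; rewrite /= inordK // h.
      have hab' : Y a b != 0 by apply: hYnz; rewrite h eqxx.
      rewrite -h /= /r ea inord_val; field; exact: hab'.
  - by move: hab => /val_inj ->; rewrite mulrC.
pose f := one^T *m K.
have hf : f *m Y = th ord0 *: f.
  by rewrite /f -mulmxA hKY mulmxA -trmx_mul hsum linearZ /= scalemxAl.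
pose D := diag_mx (\row_(i < d.+1) ths i).
have hAsP : As *m P = P *m D.
  rewrite /As mulmx_suml; under eq_bigr do rewrite -scalemxAl hEsP scalemxAr.
  rewrite -mulmx_sumr /D diag_mx_sum_delta; congr (_ *m _); apply: eq_bigr => i _.
  by rewrite mxE.
have hg : f *m D *m (Y - (th (inord 1))%:M) *m (Y - (th ord0)%:M) = 0.
  apply: rV_eq0 => x; have [y [-> hy]] := decomp x.
  rewrite mulmx_sumr big1 // => k _.
  have e1 c : (Y - c%:M) *m y k = (th k - c) *: y k.
    by rewrite mulmxBl hy mul_scalar_mx scalerBl.
  rewrite -mulmxA e1 -scalemxAr -[X in _ *: X]mulmxA e1 -scalemxAr.
  have [->|hk0] := eqVneq k ord0; first by rewrite subrr scale0r.
  have [->|hk1] := eqVneq k (inord 1); first by rewrite subrr scale0r scaler0.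
  suff -> : f *m D *m y k = 0 by rewrite !scaler0.
  have hEAs0 : E ord0 *m As *m E k = 0.
    apply/eqP; apply: contraT => hn; exfalso; apply: (hnadj k hk1); split => //.
    by rewrite eq_sym.
  pose z := D *m y k.
  have hz0 : E ord0 *m (P *m z) = 0.
    rewrite /z [P *m _]mulmxA -hAsP -mulmxA -(hEk _ _ (hy k)).
    by rewrite !mulmxA hEAs0 !mul0mx.
  have [zz [hz hzz]] := decomp z.
  have zz0 : zz ord0 = 0.
    move: hz0; rewrite hz mulmx_sumr mulmx_sumr.
    under eq_bigr do rewrite (hE0 _ _ (hzz _)).
    rewrite -big_mkcond big_pred1_eq => h0.
    by rewrite -[zz ord0]mul1mx -hPiP -mulmxA h0 mulmx0.
  rewrite -mulmxA -/z hz mulmx_sumr big1 // => l _.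
  have [->|hl] := eqVneq l ord0; first by rewrite zz0 mulmx0.
  have : (th l - th ord0) *: (f *m zz l) = 0.
    by rewrite scalerBl scalemxAr -hzz mulmxA hf -scalemxAl subrr.
  move/eqP; rewrite scaler_eq0 subr_eq0 (inj_eq thinj) (negPf hl) /=.
  by move/eqP.
pose s := D *m one.
pose t := (Y - (th (inord 1))%:M) *m s.
have hDK : D *m K = K *m D.
  rewrite /D /K mul_diag_mx mul_mx_diag; apply/matrixP => a b; rewrite !mxE.
  by case: eqP => [->|_]; rewrite ?mulr0 ?mul0r // mulrC.
have hr : (Y - (th ord0)%:M) *m t = 0.
  have sw c : (Y^T - c%:M) *m K = K *m (Y - c%:M).
    by rewrite mulmxBl mulmxBr hKY scalar_mxC.
  have hrK : ((Y - (th ord0)%:M) *m t)^T *m K = 0.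
    have trB c : (Y - c%:M)^T = Y^T - c%:M by rewrite linearB /= tr_scalar_mx.
    rewrite /t /s !trmx_mul /D tr_diag_mx !trB -/D.
    rewrite -!mulmxA sw [(_ - _) *m (K *m _)]mulmxA sw.
    by rewrite -hg /f !mulmxA -(mulmxA _ D K) hDK !mulmxA.
  apply/colP => j; move/matrixP: hrK => /(_ 0 j).
  rewrite mul_mx_diag !mxE => /eqP; rewrite mulf_eq0 => /orP [/eqP ->|] //.
  by rewrite (negPf (hknz _ _)) // -ltnS.
have hYt : Y *m t = th ord0 *: t.
  by apply/eqP; rewrite -subr_eq0 -mul_scalar_mx -mulmxBl hr.
have one_nz : one != 0.
  by apply/eqP => /matrixP /(_ ord0 0); rewrite !mxE; apply/eqP; exact: oner_neq0.
have [a ha] := uniq1 ord0 one t one_nz hsum hYt.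
have hs i : s i 0 = ths i by rewrite /s /D mul_diag_mx !mxE mulr1.
have ht i : t i 0 = (Y *m s) i 0 - th (inord 1) * s i 0.
  by rewrite /t mulmxBl mul_scalar_mx !mxE.
have e0 : th ord0 * ths (inord 1) - th (inord 1) * ths ord0 = a.
  have := congr1 (fun M : 'M_(_,_) => M ord0 0) ha.
  by rewrite /= ht hrow0 hY01 !hs !mxE mulr1.
have ed : th ord0 * ths (inord d.-1) - th (inord 1) * ths ord_max = a.
  have := congr1 (fun M : 'M_(_,_) => M ord_max 0) ha.
  by rewrite /= ht hrowd hYdd !hs !mxE mulr1.
have hmain : th ord0 * (ths (inord d.-1) - ths (inord 1)) =
    th (inord 1) * (ths ord_max - ths ord0).
  apply/eqP; rewrite -subr_eq0; apply/eqP.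
  transitivity ((th ord0 * ths (inord d.-1) - th (inord 1) * ths ord_max) -
     (th ord0 * ths (inord 1) - th (inord 1) * ths ord0)); first by ring.
  by rewrite e0 ed subrr.
split => //; split => //.
apply/eqP => h1; move: hmain; rewrite h1 mul0r => /eqP; rewrite mulf_eq0 (negPf th0nz) /=.
rewrite subr_eq0 => /eqP /thsinj /(congr1 val); rewrite /= vid vi1; lia.
Qed.
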